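(* Let $M$ be a matroid on a finite ground set. Then $M$ is a BUMAC matroid (i.e., there exist $m\ge 1$, a finite set $\mathcal{Y}$ and a binary MAC $W\in M(\mathcal{Y}\mid\mathbb{F}_2^m)$ such that $M$ is isomorphic to the matroid on $E_m=\{1,\dots,m\}$ with rank function $r(S)=I(X[S];Y,X[S^c])$) if and only if $M$ is binary (i.e., representable over $\mathbb{F}_2$).
   Context: A binary MAC with $m$ users is a channel $W$ with input alphabet $\mathbb{F}_2^m$ and finite output alphabet $\mathcal{Y}$, i.e., a family of probability distributions $W(\cdot\mid x)$ on $\mathcal{Y}$, $x\in\mathbb{F}_2^m$. Let $E_m=\{1,\dots,m\}$. Let $X[E_m]=(X[1],\dots,X[m])$ have i.i.d. uniform components on $\mathbb{F}_2$ and let $Y$ be the output of $W$ with input $X[E_m]$, so $(X[E_m],Y)$ has joint law $2^{-m}W(y\mid x)$. For $S\subseteq E_m$, $X[S]=(X[i])_{i\in S}$ and $S^c=E_m\setminus S$. Mutual information is measured in bits (logarithm base 2). The uniform mutual information function (UMIF) of $W$ is $S\mapsto I(X[S];Y,X[S^c])$; a matroid is called BUMAC if its rank function is, up to isomorphism, the UMIF of some binary MAC. A matroid is binary if it is isomorphic to the vector matroid of a matrix over $\mathbb{F}_2$ (ground set = column indices, independent sets = linearly independent column sets). *)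

(* Defs.v *)
From HB Require Import structures.
From mathcomp Require Import all_boot all_order all_algebra.
From mathcomp Require Import Rstruct exp.
Set Implicit Arguments. Unset Strict Implicit. Unset Printing Implicit Defensive.
Import Order.TTheory GRing.Theory Num.Theory.
Local Open Scope ring_scope.

Notation RR := Rdefinitions.R.

Definition is_matroid (T : finType) (indep : {set T} -> bool) : Prop :=
  [/\ indep set0,
      (forall A B : {set T}, B \subset A -> indep A -> indep B) &
      (forall A B : {set T}, indep A -> indep B -> (#|A| < #|B|)%N ->
         exists2 x, x \in B :\: A & indep (x |: A))].

Definition mrank (T : finType) (indep : {set T} -> bool) (S : {set T}) : nat :=
  \max_(A : {set T} | (A \subset S) && indep A) #|A|.

Definition cols_lin_indep (n k : nat) (A : 'M['F_2]_(n, k)) (C : {set 'I_k}) : Prop :=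
  forall c : 'I_k -> 'F_2,
    \sum_(j in C) c j *: col j A = 0 -> forall j, j \in C -> c j = 0.

Definition binary_matroid (T : finType) (indep : {set T} -> bool) : Prop :=
  exists (n k : nat) (A : 'M['F_2]_(n, k)) (f : T -> 'I_k),
    bijective f /\ forall S : {set T}, indep S <-> cols_lin_indep A (f @: S).

Definition log2 (x : RR) : RR := ln x / ln (2 : RR).

(* Mutual information I(X;Z) (in bits) of random variables X, Z defined on a
   finite sample space U carrying the probability mass function P,
   with the convention 0 log 0 = 0. *)
Definition mutual_info (U A B : finType) (P : U -> RR)
    (X : U -> A) (Z : U -> B) : RR :=
  \sum_(a : A) \sum_(b : B)
    let pab := \sum_(u | (X u == a) && (Z u == b)) P u in
    let pa := \sum_(u | X u == a) P u in
    let pb := \sum_(u | Z u == b) P u in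
    if pab == 0 then 0 else pab * log2 (pab / (pa * pb)).

Definition inputs (m : nat) := {ffun 'I_m -> 'F_2}.

Definition is_binary_MAC (m : nat) (Y : finType) (W : inputs m -> Y -> RR) : Prop :=
  (forall x y, 0 <= W x y) /\ (forall x, \sum_(y : Y) W x y = 1).

(* X[S], encoded as the vector equal to X on S and 0 off S
   (an injective encoding of the restriction (X[i])_{i in S}). *)
Definition restr (m : nat) (S : {set 'I_m}) (x : inputs m) : inputs m :=
  [ffun i => if i \in S then x i else 0].

(* Uniform mutual information function: S |-> I(X[S]; Y, X[S^c]) where
   (X, Y) has joint law 2^{-m} W(y | x). *)
Definition UMIF (m : nat) (Y : finType) (W : inputs m -> Y -> RR)
    (S : {set 'I_m}) : RR :=
  mutual_info (fun u : inputs m * Y => (2 ^+ m)^-1 * W u.1 u.2)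
    (fun u => restr S u.1)
    (fun u => (u.2, restr (~: S) u.1)).

Definition BUMAC (T : finType) (indep : {set T} -> bool) : Prop :=
  exists (m : nat), (0 < m)%N /\
  exists (Y : finType) (W : inputs m -> Y -> RR),
    is_binary_MAC W /\
    exists f : T -> 'I_m, bijective f /\
      forall S : {set T}, (mrank indep S)%:R = UMIF W (f @: S).

(* Main.v *)
Require Import Defs.
From mathcomp Require Import all_boot all_order all_algebra.
From mathcomp Require Import Rstruct exp.
From mathcomp Require Import ring lra zify.
From Stdlib Require Import Lia Classical.
Set Implicit Arguments. Unset Strict Implicit. Unset Printing Implicit Defensive.
Import Order.TTheory GRing.Theory Num.Theory.
Local Open Scope ring_scope.

Lemma F2_cases (s : 'F_2) : s = 0 \/ s = 1.
Proof. by case: s => [[|[|n]]] // Hs; [left|right]; apply/val_inj. Qed.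

Lemma F2_card : #|'F_2| = 2%N.
Proof. by rewrite card_Fp. Qed.

Lemma restrE m (D : {set 'I_m}) x i : restr D x i = if i \in D then x i else 0.
Proof. by rewrite /restr ffunE. Qed.

Lemma restr_idem m (D : {set 'I_m}) x : restr D (restr D x) = restr D x.
Proof. by apply/ffunP => i; rewrite !restrE; case: (i \in D). Qed.

Lemma restr_split m (D : {set 'I_m}) x : restr D x + restr (~: D) x = x.
Proof.
apply/ffunP => i; rewrite ffunE !restrE inE.
by case: (i \in D) => /=; rewrite ?addr0 ?add0r.
Qed.

Lemma cnt_supp m (D : {set 'I_m}) :
  #|[set x : inputs m | restr D x == x]| = (2 ^ #|D|)%N.
Proof.
have -> : (2 ^ #|D| = #|'F_2| ^ #|D|)%N by rewrite F2_card.
rewrite -(card_pffun_on 0 D (predT : {pred 'F_2})).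
apply: eq_card => x; rewrite inE; apply/eqP/pffun_onP.
  move=> Hx; split => //; apply/subsetP => i; rewrite inE => Hi.
  by apply: contraNT Hi => Hi; rewrite -Hx restrE (negbTE Hi).
move=> [Hs _]; apply/ffunP => i; rewrite restrE; case: ifP => // Hi.
apply/eqP; apply: contraFT Hi => Hi; apply: (subsetP Hs); rewrite inE eq_sym; exact: Hi.
Qed.

Lemma ln2_gt0 : 0 < ln (2 : RR).
Proof. by apply: ln_gt0; rewrite ltr1n. Qed.

Lemma log2_le0 (t : RR) : t <= 1 -> log2 t <= 0.
Proof. by move=> Ht; rewrite /log2 pmulr_lle0 ?invr_gt0 ?ln2_gt0 // ln_le0. Qed.

Lemma log2_lt0 (t : RR) : 0 < t < 1 -> log2 t < 0.
Proof. by move=> Ht; rewrite /log2 pmulr_llt0 ?invr_gt0 ?ln2_gt0 // ln_lt0. Qed.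

Lemma log2_1 : log2 1 = 0.
Proof. by rewrite /log2 ln1 mul0r. Qed.

Lemma log2_mul2X (n : nat) (t : RR) : 0 < t -> log2 (2 ^+ n * t) = n%:R + log2 t.
Proof.
move=> Ht; rewrite /log2 lnM ?posrE ?exprn_gt0 // lnXn // mulrDl.
have H2 := ln2_gt0; rewrite -[_ *+ n]mulr_natr.
by field; rewrite gt_eqF.
Qed.

Lemma log2_2X (n : nat) : log2 (2 ^+ n) = n%:R.
Proof. by rewrite -[2 ^+ n]mulr1 log2_mul2X // log2_1 addr0. Qed.

Lemma ln_ge1V (t : RR) : 0 < t -> 1 - t^-1 <= ln t.
Proof.
move=> Ht; have Ht' : 0 < t^-1 by rewrite invr_gt0.
have := @le_ln1Dx _ (t^-1 - 1); rewrite (addrC 1) subrK.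
have HV : ln t^-1 = - ln t.
  by apply/eqP; rewrite -subr_eq0 opprK -lnM ?posrE ?invr_gt0 // mulVf ?(gt_eqF Ht) // ln1.
rewrite HV => H; have {H} := H ltac:(lra); lra.
Qed.

Lemma restrB m (D : {set 'I_m}) x y : restr D (x - y) = restr D x - restr D y.
Proof. by apply/ffunP => i; rewrite !ffunE; case: (i \in D); rewrite ?subr0. Qed.

Lemma restrC0 m (D : {set 'I_m}) w : (restr (~: D) w == w) = (restr D w == 0).
Proof.
have := restr_split D w; set u := restr D w; set v := restr (~: D) w => H.
apply/eqP/eqP => E.
  by move: H; rewrite E => /(canRL (addrK w)); rewrite subrr.
by rewrite -H E add0r.
Qed.

Lemma card_inputs m : #|{: inputs m}| = (2 ^ m)%N.
Proof. by rewrite card_ffun F2_card card_ord. Qed.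

Lemma cnt_fiber m (D : {set 'I_m}) (a : inputs m) : restr D a = a ->
  #|[set x : inputs m | restr D x == a]| = (2 ^ (m - #|D|))%N.
Proof.
move=> Ha.
have -> : (m - #|D| = #|~: D|)%N by rewrite cardsCs card_ord subKn // -[X in (_ <= X)%N](card_ord m) max_card.
rewrite -cnt_supp -[LHS](card_imset _ (addIr (- a))).
apply: eq_card => w; apply/imsetP/idP.
  by move=> [x]; rewrite inE => /eqP Hx ->; rewrite inE restrC0 restrB Hx Ha subrr.
rewrite inE => Hw; exists (w + a); last by rewrite addrK.
by rewrite inE -[a in _ == a]Ha -subr_eq0 -restrB addrK -restrC0.
Qed.

Lemma sum_sub (I : finType) (p q : pred I) (F : I -> RR) :
  (forall i, p i -> q i) -> (forall i, 0 <= F i) ->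
  \sum_(i | p i) F i <= \sum_(i | q i) F i.
Proof.
move=> Hpq HF; rewrite [X in _ <= X](bigID p) /=.
rewrite (eq_bigl p); last by move=> i; case Hp: (p i); rewrite ?andbF ?andbT ?Hpq.
by rewrite lerDl sumr_ge0.
Qed.

Lemma sum_ge_term (I : finType) (p : pred I) (F : I -> RR) i0 :
  p i0 -> (forall i, 0 <= F i) -> F i0 <= \sum_(i | p i) F i.
Proof. by move=> Hp HF; rewrite (bigD1 i0) //= lerDl sumr_ge0. Qed.

Section UM.
Variables (m : nat) (Y : finType) (W : inputs m -> Y -> RR).
Hypothesis HW : is_binary_MAC W.
Variable B : {set 'I_m}.

Definition Pu (u : inputs m * Y) : RR := (2 ^+ m)^-1 * W u.1 u.2.
Definition Xf (u : inputs m * Y) := restr B u.1.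
Definition Zf (u : inputs m * Y) := (u.2, restr (~: B) u.1).
Definition pab a b := \sum_(u | (Xf u == a) && (Zf u == b)) Pu u.
Definition pa a := \sum_(u | Xf u == a) Pu u.
Definition pb b := \sum_(u | Zf u == b) Pu u.
Definition Gterm a b := if pab a b == 0 then 0 else pab a b * log2 (pab a b / pb b).
Definition Gt := \sum_a \sum_b Gterm a b.

Lemma Pu_ge0 u : 0 <= Pu u.
Proof. by rewrite /Pu; apply: mulr_ge0; [rewrite invr_ge0 exprn_ge0 | case: HW => H0 _; apply: H0]. Qed.

Lemma Pu_gt0 x y : W x y != 0 -> 0 < Pu (x, y).
Proof.
move=> H; rewrite /Pu; apply: mulr_gt0; first by rewrite invr_gt0 exprn_gt0.
by rewrite /= lt_def H; case: HW => H0 _; apply: H0.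
Qed.

Lemma pab_ge0 a b : 0 <= pab a b.
Proof. by apply: sumr_ge0 => u _; exact: Pu_ge0. Qed.

Lemma pab_le_pb a b : pab a b <= pb b.
Proof. by apply: sum_sub => [u /andP[]|]; [|exact: Pu_ge0]. Qed.

Lemma pb_sum b : pb b = \sum_a pab a b.
Proof.
rewrite /pb (partition_big Xf xpredT) //; apply: eq_bigr => a _.
by apply: eq_bigl => u; rewrite andbC.
Qed.

Lemma sum_Pu : \sum_u Pu u = 1.
Proof.
rewrite /Pu -(pair_big xpredT xpredT (fun x y => (2 ^+ m)^-1 * W x y)) /=.
under eq_bigr => x _ do rewrite -mulr_sumr (proj2 HW x) mulr1.
rewrite sumr_const card_inputs -[_ *+ _]mulr_natr natrX mulVf //.
by rewrite expf_neq0 // pnatr_eq0.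
Qed.

Lemma sum_pb : \sum_b pb b = 1.
Proof. by rewrite -sum_Pu (partition_big Zf xpredT). Qed.

Lemma sum_pab : \sum_a \sum_b pab a b = 1.
Proof. by rewrite exchange_big -sum_pb; apply: eq_bigr => b _; rewrite pb_sum. Qed.

Lemma pab_witness a b : pab a b != 0 ->
  exists u, [/\ Pu u != 0, Xf u = a & Zf u = b].
Proof.
move=> H.
have /existsP [u /andP[/andP[H1 /eqP H2] /eqP H3]] :
    [exists u, (Pu u != 0) && (Xf u == a) && (Zf u == b)].
  apply: contraR H => /existsPn Hn; apply/eqP; apply: big1 => u /andP[Ha Hb].
  by move: (Hn u); rewrite Ha Hb !andbT negbK => /eqP.
by exists u.
Qed.

Lemma pa_val a : restr B a = a -> pa a = (2 ^+ #|B|)^-1.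
Proof.
move=> Ha; rewrite /pa /Pu /Xf.
rewrite (eq_bigl (fun u : inputs m * Y => (restr B u.1 == a) && true)); last first.
  by move=> u; rewrite andbT.
rewrite -(pair_big_dep (fun x => restr B x == a) (fun _ _ => true)
  (fun x y => (2 ^+ m)^-1 * W x y)) /=.
under eq_bigr => x _ do rewrite -mulr_sumr (proj2 HW x) mulr1.
rewrite sumr_const.
have -> : #|[pred x | restr B x == a]| = #|[set x | restr B x == a]|.
  by apply: eq_card => x; rewrite inE.
rewrite cnt_fiber // -[_ *+ _]mulr_natr natrX.
have Hle : (#|B| <= m)%N by rewrite -[X in (_ <= X)%N](card_ord m) max_card.
rewrite -{1}(subnK Hle) exprD invfM mulrAC mulVf ?mul1r //.
by rewrite expf_neq0 // pnatr_eq0.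
Qed.

Lemma UMIF_E : UMIF W B = #|B|%:R + Gt.
Proof.
have -> : UMIF W B = \sum_a \sum_b
   (if pab a b == 0 then 0 else pab a b * log2 (pab a b / (pa a * pb b))) by [].
have -> : (#|B|%:R : RR) = #|B|%:R * \sum_a \sum_b pab a b by rewrite sum_pab mulr1.
rewrite /Gt mulr_sumr -big_split /=; apply: eq_bigr => a _.
rewrite mulr_sumr -big_split; apply: eq_bigr => b _.
rewrite /Gterm /=; case: eqP => [->|Hn]; first by rewrite mulr0 addr0.
have Hp : 0 < pab a b by rewrite lt_def pab_ge0 andbT; apply/eqP.
have [u [Hu Hx Hz]] := pab_witness (introN eqP Hn).
have Ha : restr B a = a by rewrite -Hx /Xf restr_idem.
rewrite pa_val //.
have Hpb : 0 < pb b := lt_le_trans Hp (pab_le_pb a b).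
rewrite invfM invrK (mulrCA (pab a b) (2 ^+ #|B|)) log2_mul2X ?divr_gt0 //.
by rewrite mulrDr; congr (_ + _); exact: mulrC.
Qed.

Lemma Gterm_le0 a b : Gterm a b <= 0.
Proof.
rewrite /Gterm; case: eqP => // Hn.
have Hp : 0 < pab a b by rewrite lt_def pab_ge0 andbT; apply/eqP.
have Hpb : 0 < pb b := lt_le_trans Hp (pab_le_pb a b).
apply: mulr_ge0_le0; first exact: pab_ge0.
by apply: log2_le0; rewrite ler_pdivrMr // mul1r pab_le_pb.
Qed.

Lemma Gt_le0 : Gt <= 0.
Proof. by apply: sumr_le0 => a _; apply: sumr_le0 => b _; exact: Gterm_le0. Qed.

Lemma UMIF_le : UMIF W B <= #|B|%:R.
Proof. by rewrite UMIF_E gerDl Gt_le0. Qed.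

End UM.

Lemma sum_le0_eq0 (I : finType) (F : I -> RR) :
  (forall i, F i <= 0) -> \sum_i F i = 0 -> forall i, F i = 0.
Proof.
move=> HF HS i; apply/eqP; rewrite -oppr_eq0; apply/eqP.
apply: (@psumr_eq0P _ _ xpredT (fun i => - F i)) => //.
  by move=> j _; rewrite oppr_ge0.
by rewrite sumrN HS oppr0.
Qed.

Lemma log2_eq0 (t : RR) : 0 < t -> log2 t = 0 -> t = 1.
Proof.
move=> Ht /eqP; rewrite /log2 mulf_eq0 invr_eq0 (gt_eqF ln2_gt0) orbF ln_eq0 //.
by move/eqP.
Qed.

Definition injS m (Y : finType) (W : inputs m -> Y -> RR) (D : {set 'I_m}) :=
  forall y x x', W x y != 0 -> W x' y != 0 ->
    restr (~: D) x = restr (~: D) x' -> x = x'.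

Lemma Pu_neq0 m (Y : finType) (W : inputs m -> Y -> RR) (u : inputs m * Y) : Pu W u != 0 -> W u.1 u.2 != 0.
Proof. by rewrite /Pu mulf_eq0 negb_or => /andP[]. Qed.

Lemma full_inj m (Y : finType) (W : inputs m -> Y -> RR) B : is_binary_MAC W ->
  UMIF W B = #|B|%:R -> injS W B.
Proof.
move=> HW; rewrite UMIF_E // => /(canRL (addKr _)); rewrite addNr => HG.
move=> y x x' Hx Hx' Hz; apply/eqP; apply: contraT => Hne.
set a := restr B x; set a' := restr B x'; set b := (y, restr (~: B) x).
have Haa : a' != a.
  apply: contra Hne => /eqP Ha.
  by rewrite -(restr_split B x) -(restr_split B x') -/a -/a' Ha Hz.
have HGa : forall a, \sum_b Gterm W B a b = 0.
  apply: sum_le0_eq0 HG => a0; apply: sumr_le0 => b0 _; exact: (Gterm_le0 HW).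
have HGab := sum_le0_eq0 (fun b0 => Gterm_le0 HW B a b0) (HGa a) b.
have Hp1 : Pu W (x, y) <= pab W B a b.
  by apply: sum_ge_term => //; [rewrite /Xf /Zf /= !eqxx | exact: (Pu_ge0 HW)].
have Hp2 : Pu W (x', y) <= pab W B a' b.
  by apply: sum_ge_term => //; [rewrite /Xf /Zf /= /a' /b -Hz !eqxx | exact: (Pu_ge0 HW)].
have Hx0 := Pu_gt0 HW Hx; have Hx0' := Pu_gt0 HW Hx'.
have Hpb : pab W B a b + pab W B a' b <= pb W B b.
  rewrite pb_sum (bigD1 a) //= (bigD1 a') //= addrA lerDl.
  by apply: sumr_ge0 => i _; exact: (pab_ge0 HW).
have Hpos : 0 < pab W B a b by lra.
move: HGab; rewrite /Gterm (gt_eqF Hpos) => /eqP; rewrite mulf_eq0 (gt_eqF Hpos) /=.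
move/eqP/log2_eq0; rewrite divr_gt0 //; last by lra.
move=> /(_ isT) E.
have E2 : pab W B a b = pb W B b.
  by rewrite -[RHS]mul1r -E mulfVK // gt_eqF //; lra.
have := pab_ge0 HW B a' b; lra.
Qed.

Section Circ.
Variables (m : nat) (Y : finType) (W : inputs m -> Y -> RR).
Hypothesis HW : is_binary_MAC W.
Variables (B : {set 'I_m}) (j0 : 'I_m).
Hypothesis Hj0 : j0 \in B.
Hypothesis Hinj : forall j, j \in B -> injS W (B :\ j).

Lemma card_pab_le2 b : (#|[pred a | pab W B a b != 0%R]| <= 2)%N.
Proof.
rewrite -[X in (_ <= X)%N]F2_card; apply: (@leq_card_in _ _ (fun a : inputs m => a j0)).
move=> a a'; rewrite !inE => /pab_witness [u [Hu Hx Hz]] /pab_witness [u' [Hu' Hx' Hz']] Ha.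
have Hy : u'.2 = u.2 by have := congr1 fst Hz; have := congr1 fst Hz'; rewrite /Zf /= => -> ->.
have Hxx : u.1 = u'.1.
  apply: (Hinj Hj0 (y := u.2)); first exact: Pu_neq0.
    by rewrite -Hy; exact: Pu_neq0.
  apply/ffunP => i; rewrite !restrE !inE negb_and negbK.
  case: (eqVneq i j0) => [->|Hij] /=.
    by move: Ha; rewrite -Hx -Hx' /Xf !restrE Hj0.
  case HiB: (i \in B) => //=.
  have : Zf B u = Zf B u' by rewrite Hz Hz'.
  by rewrite /Zf => -[_ /ffunP /(_ i)]; rewrite !restrE inE HiB.
by rewrite -Hx -Hx' /Xf Hxx.
Qed.

Lemma F_lower b : - pb W B b <= \sum_a Gterm W B a b.
Proof.
have Hl2 := ln2_gt0.
have [Hp0|Hp] := eqVneq (pb W B b) 0.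
  rewrite Hp0 oppr0; apply: sumr_ge0 => a _.
  have : pab W B a b = 0.
    by apply/eqP; rewrite eq_le pab_ge0 // andbT -Hp0 pab_le_pb.
  by rewrite /Gterm => ->; rewrite eqxx.
set p := pb W B b.
have Hpp : 0 < p by rewrite lt_def Hp; apply: sumr_ge0 => u _; exact: Pu_ge0.
pose g a := pab W B a b / ln (2:RR) - pab W B a b -
   (if pab W B a b == 0 then 0 else p / (2 * ln (2:RR))).
have Hg : forall a, g a <= Gterm W B a b.
  move=> a; rewrite /g /Gterm; case: eqP => [->|Hn]; first by rewrite mul0r !subr0.
  set s := pab W B a b.
  have Hs : 0 < s by rewrite lt_def pab_ge0 // andbT; apply/eqP.
  have Ht : (0 : RR) < 2 * (s / p) by apply: mulr_gt0 => //; exact: divr_gt0.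
  have H := ln_ge1V Ht.
  rewrite lnM ?posrE ?divr_gt0 // in H.
  have E : (2 * (s / p))^-1 = p / (2 * s) by field; rewrite !gt_eqF.
  rewrite E in H.
  have H1 : s - p / 2 <= s * (ln (2:RR) + ln (s / p)).
    have := ler_wpM2l (ltW Hs) H.
    have -> : s * (1 - p / (2 * s)) = s - p / 2.
      by field; rewrite gt_eqF.
    done.
  have E1 : s / ln (2:RR) - s - p / (2 * ln (2:RR)) = (s - p / 2 - s * ln (2:RR)) / ln (2:RR).
    by field; rewrite gt_eqF.
  rewrite E1 /log2 mulrA ler_pM2r ?invr_gt0 //.
  by move: H1; rewrite mulrDr; lra.
apply: le_trans (ler_sum _ (fun a _ => Hg a)).
rewrite /g !sumrB -mulr_suml -pb_sum -/p.
rewrite (eq_bigr (fun i => if pab W B i b != 0 then p / (2 * ln (2:RR)) else 0)); last first.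
  by move=> i _; case: eqP.
rewrite -big_mkcond /= sumr_const.
have Hk := card_pab_le2 b.
set k := #|_| in Hk *.
have Hc : 0 <= p / (2 * ln (2:RR)) by rewrite divr_ge0 // ?mulr_ge0 // ltW.
have : p / (2 * ln (2:RR)) *+ k <= p / (2 * ln (2:RR)) *+ 2 by apply: ler_wpMn2l.
have -> : p / (2 * ln (2:RR)) *+ 2 = p / ln (2:RR) by rewrite -mulr_natr; field; rewrite gt_eqF.
lra.
Qed.

Lemma circ_pair : UMIF W B = #|B|%:R - 1 -> forall y x, W x y != 0 ->
  exists x', [/\ W x' y != 0, x' != x & restr (~: B) x' = restr (~: B) x].
Proof.
rewrite UMIF_E // => HU.
have HG : Gt W B = -1 by lra.
have HGt : Gt W B = \sum_b \sum_a Gterm W B a b by rewrite /Gt exchange_big.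
have HF : forall b, \sum_a Gterm W B a b = - pb W B b.
  move=> b.
  have H0 : \sum_b (- pb W B b - \sum_a Gterm W B a b) = 0.
    by rewrite sumrB sumrN sum_pb // -HGt HG subrr.
  have := sum_le0_eq0 (F := fun b => - pb W B b - \sum_a Gterm W B a b) _ H0 b.
  move=> /(_ (fun b => ltac:(have := F_lower b; rewrite /=; lra))).
  by move=> /eqP; rewrite subr_eq0 => /eqP.
move=> y x Hx.
set b0 := (y, restr (~: B) x); set a0 := restr B x.
have Hpb : 0 < pb W B b0.
  apply: lt_le_trans (Pu_gt0 HW Hx) _.
  by apply: sum_ge_term; [rewrite /Zf /= | exact: (Pu_ge0 HW)].
case: (boolP [exists x', (W x' y != 0) && (x' != x) &&
                         (restr (~: B) x' == restr (~: B) x)]).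
  by move=> /existsP [x' /andP[/andP[H1 H2] /eqP H3]]; exists x'.
move=> /existsPn Hn; exfalso.
have Hz : forall a, a != a0 -> pab W B a b0 = 0.
  move=> a Ha; apply/eqP; apply: contraT => Hne.
  have [u [Hu Hx' Hz']] := pab_witness Hne.
  have Hy : u.2 = y by have := congr1 fst Hz'.
  have Hr : restr (~: B) u.1 = restr (~: B) x by have := congr1 snd Hz'.
  move: (Hn u.1); rewrite -Hy (Pu_neq0 Hu) Hr eqxx andbT /= negbK => /eqP Hux.
  by move: Ha; rewrite -Hx' /Xf Hux eqxx.
have Hpab : pab W B a0 b0 = pb W B b0.
  by rewrite pb_sum (bigD1 a0) //= big1 ?addr0 // => a Ha; exact: Hz.
have : \sum_a Gterm W B a b0 = 0.
  rewrite (bigD1 a0) //= big1 ?addr0.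
    by rewrite /Gterm Hpab (gt_eqF Hpb) divff ?(gt_eqF Hpb) // log2_1 mulr0.
  by move=> a Ha; rewrite /Gterm Hz // eqxx.
by rewrite HF => /eqP; rewrite oppr_eq0 (gt_eqF Hpb).
Qed.

Lemma F2_neq (a b : 'F_2) : a != b -> a = b + 1.
Proof.
case: (F2_cases a) => ->; case: (F2_cases b) => -> //;
  rewrite ?eqxx // => _; apply/val_inj => //.
Qed.

Definition ind m (D : {set 'I_m}) : inputs m := [ffun i => if i \in D then 1 else 0].

Lemma circ_flip : UMIF W B = #|B|%:R - 1 -> forall y x, W x y != 0 ->
  W (x + ind B) y != 0.
Proof.
move=> HU y x Hx; have [x' [Hx' Hne Hr]] := circ_pair HU Hx.
suff -> : x + ind B = x' by [].
apply/ffunP => i; rewrite !ffunE.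
case HiB: (i \in B).
  case: (eqVneq (x' i) (x i)) => [Heq|Hneq]; last by rewrite (F2_neq Hneq).
  exfalso; move/eqP: Hne; apply.
  apply: (Hinj HiB Hx' Hx); apply/ffunP => k; rewrite !restrE !inE negb_and negbK.
  case: (eqVneq k i) => [->|Hki] //=.
  case HkB: (k \in B) => //=.
  by move/ffunP: Hr => /(_ k); rewrite !restrE inE HkB.
by rewrite addr0; move/ffunP: Hr => /(_ i); rewrite !restrE inE HiB.
Qed.

End Circ.

Section Matroid.
Variables (T : finType) (indep : {set T} -> bool).
Hypothesis HM : is_matroid indep.

Lemma indep0 : indep set0. Proof. by case: HM. Qed.
Lemma indep_sub (A B : {set T}) : B \subset A -> indep A -> indep B.
Proof. by case: HM => _ H _; exact: H. Qed.

Lemma mrank_le (S : {set T}) : (mrank indep S <= #|S|)%N.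
Proof. by apply/bigmax_leqP => A /andP[HA _]; exact: subset_leq_card. Qed.

Lemma mrank_ge (S A : {set T}) : A \subset S -> indep A -> (#|A| <= mrank indep S)%N.
Proof.
move=> HA HiA; apply: (@leq_bigmax_cond _ _ (fun A : {set T} => #|A|)).
by rewrite HA HiA.
Qed.

Lemma mrank_indep (S : {set T}) : indep S -> mrank indep S = #|S|.
Proof. by move=> H; apply/eqP; rewrite eqn_leq mrank_le mrank_ge. Qed.

Lemma mrank_attained (S : {set T}) : exists2 A : {set T}, (A \subset S) && indep A & mrank indep S = #|A|.
Proof.
have Hc : (0 < #|[pred A : {set T} | (A \subset S) && indep A]|)%N.
  by apply/card_gt0P; exists set0; rewrite inE sub0set indep0.
have [A0 HA0 Hmax] := eq_bigmax_cond (fun A : {set T} => #|A|) Hc.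
by exists A0; [move: HA0; rewrite inE | rewrite -Hmax].
Qed.

Lemma mrank_eq_indep (S : {set T}) : mrank indep S = #|S| -> indep S.
Proof.
have [A /andP[HAS HA] ->] := mrank_attained S => Hc.
have := subset_leqif_cards HAS; rewrite Hc => -[_].
by rewrite eqxx => /esym /eqP <-.
Qed.

Definition circ (C : {set T}) := minset (fun B => ~~ indep B) C.

Lemma circ_dep (C : {set T}) : circ C -> ~~ indep C.
Proof. by case/minsetP. Qed.

Lemma circ_minus (C : {set T}) x : circ C -> x \in C -> indep (C :\ x).
Proof.
case/minsetP => _ Hmin Hx; apply: contraT => Hd.
have := Hmin _ Hd (subsetDl _ _) => /setP /(_ x).
by rewrite !inE eqxx Hx.
Qed.

Lemma circ_nonempty (C : {set T}) : circ C -> exists x, x \in C.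
Proof.
move=> Hc; case: (set_0Vmem C) => [E|[x Hx]]; last by exists x.
by move: (circ_dep Hc); rewrite E indep0.
Qed.

Lemma mrank_circ (C : {set T}) : circ C -> mrank indep C = (#|C| - 1)%N.
Proof.
move=> Hc; have [x Hx] := circ_nonempty Hc.
apply/eqP; rewrite eqn_leq; apply/andP; split.
  have : mrank indep C != #|C|.
    by apply: contraNneq (circ_dep Hc) => /mrank_eq_indep.
  have := mrank_le C; rewrite leq_eqVlt => /orP[->//|]; lia.
by rewrite (cardsD1 x C) Hx add1n subn1 /= mrank_ge ?subsetDl ?circ_minus.
Qed.

Lemma dep_has_circ (S : {set T}) : ~~ indep S -> exists2 C, circ C & C \subset S.
Proof. by move=> H; have [C HC HS] := @minset_exists _ (fun B => ~~ indep B) S H; exists C. Qed.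

End Matroid.

Definition rv m (x : inputs m) : 'rV['F_2]_m := \row_j x j.
Definition fv m (v : 'rV['F_2]_m) : inputs m := [ffun j => v 0 j].

Lemma fv_rv m (x : inputs m) : fv (rv x) = x.
Proof. by apply/ffunP => j; rewrite ffunE mxE. Qed.

Lemma fv0 m : fv (0 : 'rV['F_2]_m) = 0.
Proof. by apply/ffunP => j; rewrite !ffunE mxE. Qed.

Lemma fvD m (a b : 'rV['F_2]_m) : fv (a + b) = fv a + fv b.
Proof. by apply/ffunP => j; rewrite !ffunE mxE. Qed.

Section Fwd.
Variables (T : finType) (indep : {set T} -> bool).
Hypothesis HM : is_matroid indep.
Variables (m : nat) (Y : finType) (W : inputs m -> Y -> RR).
Hypothesis HW : is_binary_MAC W.
Variable f : T -> 'I_m.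
Hypothesis Hf : bijective f.
Hypothesis Hr : forall S, (mrank indep S)%:R = UMIF W (f @: S).

Lemma finj : injective f. Proof. exact: bij_inj. Qed.

Lemma imsetD1_inj (A : {set T}) x : f @: (A :\ x) = f @: A :\ f x.
Proof.
apply/setP => j; rewrite !inE; apply/imsetP/andP.
  move=> [z]; rewrite !inE => /andP[Hzx Hz] ->; split.
    by rewrite (inj_eq finj).
  exact: imset_f.
move=> [Hj /imsetP [z Hz Ej]]; exists z => //; rewrite !inE Hz andbT.
by apply: contra Hj => /eqP Hzx; rewrite Ej Hzx.
Qed.

Lemma indep_inj S : indep S -> injS W (f @: S).
Proof.
by move=> H; apply: full_inj HW _; rewrite -Hr mrank_indep // card_imset //; exact: finj.
Qed.

Lemma circ_closed C : circ indep C -> forall y x, W x y != 0 ->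
  W (x + ind (f @: C)) y != 0.
Proof.
move=> Hc; have [c0 Hc0] := circ_nonempty HM Hc.
have Hj0 : f c0 \in f @: C by exact: imset_f.
apply: (circ_flip HW Hj0).
  move=> j /imsetP [c Hc1 ->]; rewrite -imsetD1_inj; apply: indep_inj.
  exact: circ_minus.
rewrite -Hr mrank_circ // card_imset; last exact: finj.
have H1 : (1 <= #|C|)%N by apply/card_gt0P; exists c0.
by rewrite natrB.
Qed.

Definition Lmat : 'M['F_2]_(#|{: {set T}}|, m) :=
  \matrix_(i, j) (if circ indep (enum_val i) then ind (f @: enum_val i) j else 0).
Definition Kmat := cokermx Lmat.
Definition Amat : 'M['F_2]_(m, m) := \matrix_(i, j) Kmat j i.

Lemma rowL i : row i Lmat =
  rv (if circ indep (enum_val i) then ind (f @: enum_val i) else 0).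
Proof. by apply/rowP => j; rewrite !mxE; case: ifP => //; rewrite ffunE. Qed.

Lemma closure v : (v <= Lmat)%MS -> forall y x, W x y != 0 -> W (x + fv v) y != 0.
Proof.
case/submxP => D ->; rewrite mulmx_sum_row.
pose Q (w : 'rV['F_2]_m) := forall y x, W x y != 0 -> W (x + fv w) y != 0.
apply: (big_ind Q).
- by move=> y x Hx; rewrite fv0 addr0.
- by move=> a b Ha Hb y x Hx; rewrite fvD addrA; apply: Hb; apply: Ha.
move=> i _; case: (F2_cases (D 0 i)) => ->.
  by rewrite scale0r => y x Hx; rewrite fv0 addr0.
rewrite scale1r rowL /Q fv_rv; case: ifP => Hc.
  by move=> y x Hx; apply: circ_closed.
by move=> y x Hx; rewrite addr0.
Qed.

Lemma cols_sum (c : 'I_m -> 'F_2) (D : {set 'I_m}) :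
  (\sum_(j in D) c j *: col j Amat == 0) = (rv (restr D (finfun c)) <= Lmat)%MS.
Proof.
rewrite submxE.
have E1 : forall i k, (\sum_(j in D) c j *: col j Amat) i k =
    \sum_(j in D) c j * Kmat j i.
  by move=> i k; rewrite summxE; apply: eq_bigr => j _; rewrite !mxE.
have E2 : forall k i, (rv (restr D (finfun c)) *m Kmat) k i =
    \sum_(j in D) c j * Kmat j i.
  move=> k i; rewrite mxE [RHS]big_mkcond /=; apply: eq_bigr => j _.
  by rewrite !mxE !ffunE; case: ifP => //; rewrite mul0r.
apply/eqP/eqP => H; apply/matrixP => i k.
  by rewrite E2 -(E1 _ 0) H !mxE.
by rewrite E1 -(E2 0) H !mxE.
Qed.

Lemma fwd_core : binary_matroid indep.
Proof.
have [y0 Hy0] : exists y, W 0 y != 0.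
  apply/existsP; apply: contraT => /existsPn Hn.
  case: HW => _ /(_ 0); rewrite big1; last by move=> y _; apply/eqP; rewrite -[_ == _]negbK Hn.
  by move=> /eqP; rewrite eq_sym oner_eq0.
exists m, m, Amat, f; split => // S; split.
  move=> HS c Hc j Hj.
  have Hv : (rv (restr (f @: S) (finfun c)) <= Lmat)%MS by rewrite -cols_sum Hc.
  have := closure Hv Hy0; rewrite fv_rv add0r => H1.
  have := indep_inj HS Hy0 H1.
  have -> : restr (~: (f @: S)) 0 = restr (~: (f @: S)) (restr (f @: S) (finfun c)).
    by apply/ffunP => i; rewrite !ffunE inE; case: (i \in f @: S).
  move=> /(_ erefl) /ffunP /(_ j); rewrite !ffunE Hj.
  by move=> ->.
move=> H; apply: contraT => HnS.
have [C HC HCS] := dep_has_circ HnS.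
have [c0 Hc0] := circ_nonempty HM HC.
have Hfc0 : f c0 \in f @: S by apply: imset_f; exact: (subsetP HCS).
have Hsum : \sum_(j in f @: S) ind (f @: C) j *: col j Amat = 0.
  apply/eqP; rewrite cols_sum.
  have -> : restr (f @: S) (finfun (fun j => ind (f @: C) j)) = ind (f @: C).
    apply/ffunP => j; rewrite !ffunE; case: ifP => // HjS.
    case: ifP => // HjC; exfalso; move: HjS; rewrite (subsetP (imsetS f HCS)) //.
  have := row_sub (enum_rank C) Lmat; rewrite rowL enum_rankK.
  by rewrite HC.
have := H _ Hsum (f c0) Hfc0.
by rewrite ffunE imset_f // => /eqP; rewrite oner_eq0.
Qed.

End Fwd.

Definition cv k (x : inputs k) : 'cV['F_2]_k := \col_j x j.

Lemma cvB k (x y : inputs k) : cv (x - y) = cv x - cv y.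
Proof. by apply/matrixP => i j; rewrite !mxE !ffunE. Qed.

Lemma mul_cv n k (A : 'M['F_2]_(n, k)) (w : inputs k) :
  A *m cv w = \sum_j w j *: col j A.
Proof.
apply/matrixP => i l; rewrite !mxE summxE; apply: eq_bigr => j _.
by rewrite !mxE mulrC.
Qed.

Lemma mul_cv_supp n k (A : 'M['F_2]_(n, k)) (J : {set 'I_k}) (w : inputs k) :
  restr J w = w -> A *m cv w = \sum_(j in J) w j *: col j A.
Proof.
move=> Hw; rewrite mul_cv [RHS]big_mkcond /=; apply: eq_bigr => j _.
case: ifP => // HjJ; rewrite -Hw restrE HjJ scale0r //.
Qed.

Definition KB n k (A : 'M['F_2]_(n, k)) (B : {set 'I_k}) :=
  [set a : inputs k | (restr B a == a) && (A *m cv a == 0)].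

Section Count.
Variables (T : finType) (indep : {set T} -> bool).
Hypothesis HM : is_matroid indep.
Variables (n k : nat) (A : 'M['F_2]_(n, k)) (g : T -> 'I_k).
Hypothesis Hg : bijective g.
Hypothesis Hind : forall S, indep S <-> cols_lin_indep A (g @: S).

Lemma ginj : injective g. Proof. exact: bij_inj. Qed.

Lemma kernel_count (S : {set T}) : #|KB A (g @: S)| = (2 ^ (#|S| - mrank indep S))%N.
Proof.
have [I /andP[HIS HI] Hr] := mrank_attained HM S.
set B := g @: S; set J := g @: I; set D := B :\: J.
have HJB : J \subset B by exact: imsetS.
have HD : #|D| = (#|S| - #|I|)%N.
  by rewrite cardsD (setIidPr HJB) !card_imset //; exact: ginj.
have HJi := proj1 (Hind I) HI.
rewrite Hr -HD -cnt_supp.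
have Hinj : {in KB A B &, injective (restr D)}.
  move=> a a'; rewrite !inE => /andP[/eqP Ha /eqP HAa] /andP[/eqP Ha' /eqP HAa'] Heq.
  apply/eqP; rewrite -subr_eq0; apply/eqP; set w := a - a'.
  have Hw : restr J w = w.
    apply/ffunP => i; rewrite restrE; case: ifP => // HiJ.
    rewrite /w !ffunE; case HiB: (i \in B).
      have HiD : i \in D by rewrite inE HiJ HiB.
      move/ffunP: Heq => /(_ i); rewrite !restrE HiD => ->.
      by rewrite subrr.
    by rewrite -Ha -Ha' !restrE HiB subrr.
  have HAw : A *m cv w = 0 by rewrite cvB mulmxBr HAa HAa' subrr.
  have Hz := HJi (fun j => w j); rewrite -mul_cv_supp // in Hz.
  have {}Hz := Hz HAw.
  apply/ffunP => i; rewrite -Hw restrE ffunE; case: ifP => HiJ; last by rewrite ffunE.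
  by have := Hz i HiJ; rewrite /w !ffunE.
have Hex : forall j, j \in D ->
    exists e, (e \in KB A B) && (restr D e == ind [set j]).
  move=> j; rewrite inE => /andP[HjJ /imsetP [x HxS Ejx]].
  have HxI : x \notin I by apply: contra HjJ => Hx; rewrite Ejx imset_f.
  have HnI : ~ indep (x |: I).
    move=> Hi; have := mrank_ge (_ : x |: I \subset S) Hi.
    rewrite cardsU1 HxI -Hr /= => /(_ ltac:(by rewrite subUset sub1set HxS HIS)).
    by rewrite ltnn.
  have HnC : ~ cols_lin_indep A (j |: J).
    by rewrite Ejx -imsetU1 => /(proj2 (Hind _)).
  have [c Hc1] := not_all_ex_not _ _ HnC.
  have [Hc Hc2] := imply_to_and _ _ Hc1.
  have [i0 Hi3] := not_all_ex_not _ _ Hc2.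
  have [Hi0 Hci0] := imply_to_and _ _ Hi3.
  have Hcj : c j = 1.
    case: (F2_cases (c j)) => // Hcj0; exfalso.
    move: Hc; rewrite big_setU1 //= Hcj0 scale0r add0r => /HJi Hz.
    move: Hi0 => /setU1P [Eij|Hi0J].
      by apply: Hci0; rewrite Eij.
    by apply: Hci0; apply: Hz.
  have HjB : j \in B by rewrite Ejx imset_f.
  exists (restr (j |: J) (finfun c)); apply/andP; split.
    rewrite inE; apply/andP; split.
      apply/eqP/ffunP => i; rewrite !restrE; case: ifP => // HiB.
      rewrite ffunE; case: ifP => // /setU1P [Eij|HiJ]; first by move: HiB; rewrite Eij HjB.
      by rewrite (subsetP HJB _ HiJ) in HiB.
    rewrite (@mul_cv_supp _ _ _ (j |: J)) ?restr_idem //.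
    by apply/eqP; rewrite -[RHS]Hc; apply: eq_bigr => i Hi; rewrite restrE Hi ffunE.
  apply/eqP/ffunP => i; rewrite !restrE !ffunE !inE.
  case: (eqVneq i j) => [->|Hij] /=.
    by rewrite HjJ HjB Hcj.
  by case: (i \in J); case: (i \in B).
pose E j := odflt 0 [pick e | (e \in KB A B) && (restr D e == ind [set j])].
have HE : forall j, j \in D -> (E j \in KB A B) /\ restr D (E j) = ind [set j].
  move=> j Hj; rewrite /E; case: pickP => [e /andP[He /eqP He2]|Hn] //=.
  by have [e He] := Hex j Hj; rewrite Hn in He.
rewrite -(card_in_imset Hinj); apply: eq_card => d.
rewrite [in RHS]inE; apply/imsetP/idP.
  by move=> [a _ ->]; rewrite restr_idem.
move=> /eqP Hd.
pose a := \sum_(j in D) [ffun i => d j * E j i].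
have Ha : forall i, a i = \sum_(j in D) d j * E j i.
  by move=> i; rewrite /a sum_ffunE; apply: eq_bigr => j _; rewrite ffunE.
exists a.
  rewrite inE; apply/andP; split.
    apply/eqP/ffunP => i; rewrite restrE; case: ifP => // HiB.
    rewrite Ha big1 // => j Hj; have [HEj _] := HE j Hj.
    move: HEj; rewrite inE => /andP[/eqP <- _].
    by rewrite restrE HiB mulr0.
  have -> : cv a = \sum_(j in D) d j *: cv (E j).
    apply/matrixP => i l; rewrite mxE Ha summxE; apply: eq_bigr => j _.
    by rewrite !mxE.
  rewrite mulmx_sumr big1 // => j Hj; have [HEj _] := HE j Hj.
  move: HEj; rewrite inE => /andP[_ /eqP HA0].
  by rewrite -scalemxAr HA0 scaler0.
apply/ffunP => i; rewrite restrE; case: ifP => HiD; last first.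
  by rewrite -Hd restrE HiD.
rewrite Ha (bigD1 i) //= big1.
  have [_ HEi] := HE i HiD; move/ffunP: HEi => /(_ i).
  by rewrite restrE HiD !ffunE inE eqxx => ->; rewrite mulr1 addr0.
move=> j /andP[Hj Hji]; have [_ HEj] := HE j Hj; move/ffunP: HEj => /(_ i).
by rewrite restrE HiD !ffunE inE eq_sym (negbTE Hji) => ->; rewrite mulr0.
Qed.

End Count.

Lemma log2V (t : RR) : 0 < t -> log2 t^-1 = - log2 t.
Proof.
move=> Ht; rewrite /log2 -mulNr; congr (_ * _).
apply/eqP; rewrite -subr_eq0 opprK -lnM ?posrE ?invr_gt0 // mulVf ?(gt_eqF Ht) //.
by rewrite ln1.
Qed.

Section Det.
Variables (n k : nat) (A : 'M['F_2]_(n, k)).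
Definition Wd (x : inputs k) (y : 'cV['F_2]_n) : RR := if y == A *m cv x then 1 else 0.

Lemma Wd_MAC : is_binary_MAC Wd.
Proof.
split; first by move=> x y; rewrite /Wd; case: ifP.
move=> x; rewrite (bigD1 (A *m cv x)) //= /Wd eqxx big1 ?addr0 //.
by move=> y /negPf ->.
Qed.

Lemma UMIF_det (B : {set 'I_k}) : UMIF Wd B = #|B|%:R - log2 (#|KB A B|%:R).
Proof.
have HW := Wd_MAC.
set N := #|KB A B|.
have HN : (0 < N)%N.
  apply/card_gt0P; exists 0; rewrite inE; apply/andP; split.
    by apply/eqP/ffunP => i; rewrite !ffunE; case: ifP.
  by apply/eqP/matrixP => i j; rewrite !mxE big1 // => l _; rewrite !mxE ffunE mulr0.
have HNr : (0 : RR) < N%:R by rewrite ltr0n.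
have Hk : (0 : RR) < (2 ^+ k)^-1 by rewrite invr_gt0 exprn_gt0.
rewrite UMIF_E //; congr (_ + _).
have HG : forall a b, Gterm Wd B a b = pab Wd B a b * - log2 N%:R.
  move=> a b; rewrite /Gterm; case: eqP => [->|Hn]; first by rewrite mul0r.
  have [u0 [Hu0 Hx0 Hz0]] := pab_witness (introN eqP Hn).
  have HWu : u0.2 = A *m cv u0.1.
    have := Pu_neq0 Hu0; rewrite /Wd; case: (u0.2 =P A *m cv u0.1) => // _; by rewrite eqxx.
  have Hpab : pab Wd B a b = (2 ^+ k)^-1.
    rewrite /pab (big_pred1 u0); first by rewrite /Pu HWu /Wd eqxx mulr1.
    move=> u; rewrite /= -Hx0 -Hz0; apply/andP/eqP; last by move=> ->; rewrite !eqxx.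
    move=> [/eqP H1 /eqP H2].
    have E2 : u.2 = u0.2 by have := congr1 fst H2.
    have E3 : restr (~: B) u.1 = restr (~: B) u0.1 by have := congr1 snd H2.
    have E1 : u.1 = u0.1.
      rewrite -(restr_split B u.1) -(restr_split B u0.1) E3; congr (_ + _); exact: H1.
    by rewrite [u]surjective_pairing [u0]surjective_pairing E1 E2.
  have Hpb : pb Wd B b = (2 ^+ k)^-1 * N%:R.
    rewrite /pb (reindex_onto (fun x => (x, u0.2)) fst); last first.
      by move=> [x y] /eqP; rewrite -Hz0 /Zf /= => -[-> _].
    rewrite /= -Hz0 /Zf /Pu /Wd /=.
    rewrite (eq_bigl (fun x => restr (~: B) x == restr (~: B) u0.1)); last first.
      by move=> x; rewrite eqxx andbT xpair_eqE eqxx.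
    rewrite -mulr_sumr -big_mkcondr sumr_const; congr (_ * _).
    set x0 := u0.1 in HWu *; set y := u0.2 in HWu *.
    suff -> : #|[pred x | (restr (~: B) x == restr (~: B) x0) && (y == A *m cv x)]| = N by [].
    rewrite /N -[LHS](card_imset _ (addIr (- x0))); apply: eq_card => w.
    rewrite [in RHS]inE; apply/imsetP/idP.
      move=> [x]; rewrite inE => /andP[/eqP Hx /eqP Hy] ->; apply/andP; split.
        by rewrite -{1}(setCK B) restrC0 restrB Hx subrr.
      by rewrite cvB mulmxBr -Hy HWu subrr.
    move=> /andP[Hw1 /eqP Hw2]; exists (w + x0); last by rewrite addrK.
    rewrite inE; apply/andP; split.
      rewrite -{1}(setCK B) restrC0 in Hw1.
      have HD : restr (~: B) (w + x0) = restr (~: B) w + restr (~: B) x0.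
        by apply/ffunP => i; rewrite !ffunE; case: (i \in ~: B); rewrite ?addr0.
      by rewrite HD (eqP Hw1) add0r.
    apply/eqP; rewrite HWu; apply/eqP; rewrite eq_sym -subr_eq0 -mulmxBr -cvB.
    by rewrite addrK Hw2.
  have -> : pab Wd B a b / pb Wd B b = N%:R^-1.
    by rewrite Hpab Hpb invfM mulrA mulfV ?(gt_eqF Hk) ?mul1r.
  by rewrite log2V.
rewrite /Gt (eq_bigr (fun a => \sum_b pab Wd B a b * - log2 N%:R)); last first.
  by move=> a _; apply: eq_bigr => b _; exact: HG.
by rewrite -[RHS]mul1r -(sum_pab HW B) mulr_suml; apply: eq_bigr => a _; rewrite mulr_suml.
Qed.
End Det.

Unset Implicit Arguments.

Theorem mainTheorem1 (T : finType) (indep : {set T} -> bool) :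
  is_matroid indep -> (0 < #|T|)%N ->
  (BUMAC indep <-> binary_matroid indep).
Proof.
move=> HM HT; split.
  move=> [m [Hm [Y [W [HW [f [Hf Hr]]]]]]].
  exact: (fwd_core HM HW Hf Hr).
move=> [n [k [A [g [Hg Hind]]]]].
exists k; split.
  by rewrite -[k](card_ord k) -(bij_eq_card Hg).
exists ('cV['F_2]_n : finType), (Wd A); split; first exact: Wd_MAC.
exists g; split => // S.
rewrite UMIF_det (kernel_count HM Hg Hind) card_imset; last exact: bij_inj.
rewrite natrX log2_2X natrB ?mrank_le //.
by rewrite opprB addrC subrK.
Qed.
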